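(* Let $\mathcal N$ be an orchard network and let $\mathcal N=\mathcal N_0,\mathcal N_1,\dots,\mathcal N_\ell$ be a maximal cherry-reduction sequence of $\mathcal N$. Then this sequence is complete, i.e. $\mathcal N_\ell$ consists of a single vertex.
   Context: A phylogenetic network on $X$ ($X$ non-empty finite) is a rooted acyclic directed graph with no parallel arcs such that: the unique root has in-degree $0$ and out-degree $2$; every vertex of out-degree $0$ has in-degree $1$, and the set of such vertices (leaves) is $X$; every other vertex has either in-degree $1$ and out-degree $2$ (tree vertex) or in-degree $2$ and out-degree $1$ (reticulation). If $|X|=1$ a single vertex is also allowed. For a $2$-element subset $\{a,b\}\subseteq X$ with parents $p_a,p_b$: $\{a,b\}$ is a cherry if $p_a=p_b$; it is a reticulated cherry with reticulation leaf $b$ if $p_b$ is a reticulation and $(p_a,p_b)$ is an arc. Reducing $b$ in a cherry means deleting $b$ and suppressing the resulting vertex of in-degree 1 and out-degree 1 (if the common parent is the root, delete $b$ and the root, leaving the single vertex $a$). Cutting a reticulated cherry $\{a,b\}$ means deleting the arc $(p_a,p_b)$ and suppressing the two resulting vertices of in-degree 1 and out-degree 1. These are cherry reductions. A cherry-reduction sequence of $\mathcal N$ is a sequence $\mathcal N=\mathcal N_0,\dots,\mathcal N_k$ where each $\mathcal N_i$ is obtained from $\mathcal N_{i-1}$ by one cherry reduction; it is maximal if $\mathcal N_k$ has no cherries and no reticulated cherries, and complete if $\mathcal N_k$ is a single vertex. $\mathcal N$ is an orchard network if it has a complete cherry-reduction sequence. *)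

(* Defs.v *)
From mathcomp Require Import all_boot.
Set Implicit Arguments. Unset Strict Implicit. Unset Printing Implicit Defensive.

Record net := Net { verts : seq nat; arcs : seq (nat * nat) }.

Definition indeg (N : net) (v : nat) : nat := count (fun e => e.2 == v) (arcs N).
Definition outdeg (N : net) (v : nat) : nat := count (fun e => e.1 == v) (arcs N).

Inductive dpath (N : net) : nat -> nat -> Prop :=
| dpath_arc u v : (u, v) \in arcs N -> dpath N u v
| dpath_cons u v w : (u, v) \in arcs N -> dpath N v w -> dpath N u w.

Definition acyclic (N : net) : Prop := forall v, ~ dpath N v v.

(* N is a phylogenetic network (on its set of leaves X = vertices of out-degree 0).
   No parallel arcs = arcs listed without repetition.  X is automatically
   non-empty and finite. *)
Definition is_network (N : net) : Prop :=
  uniq (verts N) /\ uniq (arcs N) /\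
  (forall e, e \in arcs N -> e.1 \in verts N /\ e.2 \in verts N) /\
  acyclic N /\
  ( (exists v, verts N = [:: v] /\ arcs N = [::])  (* |X| = 1, single vertex *)
  \/
    (exists r, r \in verts N /\ indeg N r = 0 /\ outdeg N r = 2 /\
       forall v, v \in verts N -> v <> r ->
         (indeg N v = 1 /\ outdeg N v = 0) \/
         (indeg N v = 1 /\ outdeg N v = 2) \/
         (indeg N v = 2 /\ outdeg N v = 1))).

Definition is_leaf (N : net) (x : nat) : Prop := x \in verts N /\ outdeg N x = 0.
Definition is_retic (N : net) (v : nat) : Prop := indeg N v = 2 /\ outdeg N v = 1.

Definition cherry_at (N : net) (a b p : nat) : Prop :=
  a <> b /\ is_leaf N a /\ is_leaf N b /\ (p, a) \in arcs N /\ (p, b) \in arcs N.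

Definition ret_cherry_at (N : net) (a b pa pb : nat) : Prop :=
  a <> b /\ is_leaf N a /\ is_leaf N b /\ (pa, a) \in arcs N /\ (pb, b) \in arcs N /\
  is_retic N pb /\ (pa, pb) \in arcs N.

Definition has_cherry (N : net) : Prop := exists a b p, cherry_at N a b p.
Definition has_ret_cherry (N : net) : Prop := exists a b pa pb, ret_cherry_at N a b pa pb.

(* N' is obtained from N by reducing b in a cherry {a,b}: delete b and suppress
   the common parent p (if p is the root, delete b and the root, leaving a). *)
Definition reduce_cherry (N : net) (b : nat) (N' : net) : Prop :=
  exists a p, cherry_at N a b p /\
  ( (indeg N p = 0 /\ verts N' = [:: a] /\ arcs N' = [::])
  \/
    (exists g, (g, p) \in arcs N /\
       uniq (verts N') /\ uniq (arcs N') /\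
       (forall x, x \in verts N' <-> (x \in verts N /\ x <> b /\ x <> p)) /\
       (forall e, e \in arcs N' <->
          (e = (g, a) \/ (e \in arcs N /\ e.1 <> p /\ e.2 <> p /\ e.2 <> b))))).

(* N' is obtained from N by cutting the reticulated cherry {a,b} (reticulation
   leaf b): delete the arc (pa,pb) and suppress pa and pb. *)
Definition cut_ret_cherry (N : net) (a b : nat) (N' : net) : Prop :=
  exists pa pb ga gb, ret_cherry_at N a b pa pb /\
    (ga, pa) \in arcs N /\ (gb, pb) \in arcs N /\ gb <> pa /\
    uniq (verts N') /\ uniq (arcs N') /\
    (forall x, x \in verts N' <-> (x \in verts N /\ x <> pa /\ x <> pb)) /\
    (forall e, e \in arcs N' <->
       (e = (ga, a) \/ e = (gb, b) \/
        (e \in arcs N /\ e.1 <> pa /\ e.2 <> pa /\ e.1 <> pb /\ e.2 <> pb))).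

Definition cherry_reduction (N N' : net) : Prop :=
  (exists b, reduce_cherry N b N') \/ (exists a b, cut_ret_cherry N a b N').

Definition reduction_seq (N : net) (Ns : nat -> net) (l : nat) : Prop :=
  Ns 0 = N /\ forall i, i < l -> cherry_reduction (Ns i) (Ns i.+1).

Definition single_vertex (N : net) : Prop :=
  exists v, verts N = [:: v] /\ arcs N = [::].

Definition maximal_seq (N : net) (Ns : nat -> net) (l : nat) : Prop :=
  reduction_seq N Ns l /\ ~ has_cherry (Ns l) /\ ~ has_ret_cherry (Ns l).

Definition complete_seq (N : net) (Ns : nat -> net) (l : nat) : Prop :=
  reduction_seq N Ns l /\ single_vertex (Ns l).

Definition orchard (N : net) : Prop :=
  is_network N /\ exists Ns l, complete_seq N Ns l.

(* Main.v *)
Require Import Defs.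
From mathcomp Require Import all_boot.
From Stdlib Require Import ClassicalDescription.
From mathcomp Require Import zify.
Set Implicit Arguments. Unset Strict Implicit. Unset Printing Implicit Defensive.

Lemma count_ge (T : eqType) (P : pred T) (s t : seq T) :
  uniq t -> {subset t <= s} -> all P t -> size t <= count P s.
Proof.
move=> Ut Sts /allP Pt; rewrite -size_filter; apply: uniq_leq_size => // x xt.
by rewrite mem_filter Pt // Sts.
Qed.

Lemma count0_mem (T : eqType) (P : pred T) (s : seq T) x :
  count P s = 0 -> x \in s -> ~~ P x.
Proof.
move=> H xs; apply/negP => Px.
have : 0 < count P s by rewrite -has_count; apply/hasP; exists x.
by rewrite H.
Qed.

Lemma countP_gt0 (T : eqType) (P : pred T) (s : seq T) x :
  x \in s -> P x -> 0 < count P s.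
Proof. by move=> xs Px; rewrite -has_count; apply/hasP; exists x. Qed.

Lemma outdeg0 N x y : outdeg N x = 0 -> (x, y) \in arcs N -> False.
Proof. by move=> H /(count0_mem H) /=; rewrite eqxx. Qed.

Lemma outdeg_ge2 N v x y : uniq (arcs N) -> (v,x) \in arcs N -> (v,y) \in arcs N ->
  x != y -> 2 <= outdeg N v.
Proof.
move=> U hx hy nxy.
have := @count_ge _ (fun e : nat * nat => e.1 == v) (arcs N) [:: (v,x); (v,y)].
rewrite /= !eqxx inE xpair_eqE eqxx (negbTE nxy) /=; apply=> // e.
by rewrite !inE => /orP[]/eqP->.
Qed.

Lemma outdeg_ge3 N v x y z : uniq (arcs N) -> (v,x) \in arcs N -> (v,y) \in arcs N ->
  (v,z) \in arcs N -> x != y -> x != z -> y != z -> 3 <= outdeg N v.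
Proof.
move=> U hx hy hz nxy nxz nyz.
have := @count_ge _ (fun e : nat * nat => e.1 == v) (arcs N) [:: (v,x); (v,y); (v,z)].
rewrite /= !eqxx !inE !xpair_eqE eqxx (negbTE nxy) (negbTE nxz) (negbTE nyz) /=; apply=> // e.
by rewrite !inE => /or3P[]/eqP->.
Qed.

Lemma indeg_ge2 N v x y : uniq (arcs N) -> (x,v) \in arcs N -> (y,v) \in arcs N ->
  x != y -> 2 <= indeg N v.
Proof.
move=> U hx hy nxy.
have := @count_ge _ (fun e : nat * nat => e.2 == v) (arcs N) [:: (x,v); (y,v)].
rewrite /= !eqxx inE xpair_eqE eqxx (negbTE nxy) /=; apply=> // e.
by rewrite !inE => /orP[]/eqP->.
Qed.

Lemma indeg_ge3 N v x y z : uniq (arcs N) -> (x,v) \in arcs N -> (y,v) \in arcs N ->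
  (z,v) \in arcs N -> x != y -> x != z -> y != z -> 3 <= indeg N v.
Proof.
move=> U hx hy hz nxy nxz nyz.
have := @count_ge _ (fun e : nat * nat => e.2 == v) (arcs N) [:: (x,v); (y,v); (z,v)].
rewrite /= !eqxx !inE !xpair_eqE eqxx (negbTE nxy) (negbTE nxz) (negbTE nyz) /=; apply=> // e.
by rewrite !inE => /or3P[]/eqP->.
Qed.

Lemma outdeg_gt0 N x y : (x,y) \in arcs N -> 0 < outdeg N x.
Proof. by move=> h; apply: (countP_gt0 h) => /=. Qed.
Lemma indeg_gt0 N x y : (x,y) \in arcs N -> 0 < indeg N y.
Proof. by move=> h; apply: (countP_gt0 h) => /=. Qed.


Definition classif N r := forall v, v \in verts N -> v <> r ->
   (indeg N v = 1 /\ outdeg N v = 0) \/ (indeg N v = 1 /\ outdeg N v = 2) \/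
   (indeg N v = 2 /\ outdeg N v = 1).

Definition netR N r := [/\ uniq (verts N), uniq (arcs N),
  (forall e, e \in arcs N -> e.1 \in verts N /\ e.2 \in verts N), acyclic N &
  [/\ r \in verts N, indeg N r = 0, outdeg N r = 2 & classif N r]].

Lemma net_netR N : is_network N -> arcs N <> [::] -> exists r, netR N r.
Proof.
move=> [uV [uA [ed [ac [[v [_ hA]]|[r [rV [ir [or cl]]]]]]]]] hne //.
by exists r; split.
Qed.

Lemma netR_net N r : netR N r -> is_network N.
Proof.
move=> [uV uA ed ac [rV ir or cl]]; do 4 (split=> //); right; exists r; split=> //.
Qed.

Section NetFacts.
Variables (N : net) (r : nat).
Hypothesis hN : netR N r.

Lemma nuA : uniq (arcs N). Proof. by case: hN. Qed.
Lemma nuV : uniq (verts N). Proof. by case: hN. Qed.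
Lemma arcV1 x y : (x,y) \in arcs N -> x \in verts N.
Proof. by case: hN => _ _ e _ _ /e []. Qed.
Lemma arcV2 x y : (x,y) \in arcs N -> y \in verts N.
Proof. by case: hN => _ _ e _ _ /e []. Qed.
Lemma nacyc : acyclic N. Proof. by case: hN. Qed.
Lemma arc_neq x y : (x,y) \in arcs N -> x <> y.
Proof. by move=> h E; subst; apply: (nacyc (dpath_arc h)). Qed.
Lemma arc_neq2 x y : (x,y) \in arcs N -> (y,x) \in arcs N -> False.
Proof. by move=> h1 h2; apply: (nacyc (dpath_cons h1 (dpath_arc h2))). Qed.

Lemma vtype v : v \in verts N ->
   (v = r /\ indeg N v = 0 /\ outdeg N v = 2) \/
   (indeg N v = 1 /\ outdeg N v = 0) \/ (indeg N v = 1 /\ outdeg N v = 2) \/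
   (indeg N v = 2 /\ outdeg N v = 1).
Proof.
case: hN => _ _ _ _ [rV ir or cl] vV.
case: (v =P r) => [->|nr]; first by left.
by right; apply: cl.
Qed.

Lemma two_ch v x y : (v,x) \in arcs N -> (v,y) \in arcs N -> x <> y ->
  outdeg N v = 2 /\ indeg N v <= 1.
Proof.
move=> hx hy nxy; have := outdeg_ge2 nuA hx hy (introN eqP nxy).
by case: (vtype (arcV1 hx)) => [[_ [-> ->]]|[[-> ->]|[[-> ->]|[-> ->]]]].
Qed.

Lemma two_ch_z v x y z : (v,x) \in arcs N -> (v,y) \in arcs N -> x <> y ->
  (v,z) \in arcs N -> z = x \/ z = y.
Proof.
move=> hx hy nxy hz; case: (two_ch hx hy nxy) => o2 _.
case: (z =P x) => [|nzx]; first by left.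
case: (z =P y) => [|nzy]; first by right.
have := outdeg_ge3 nuA hx hy hz (introN eqP nxy) (introN eqP (nesym nzx)) (introN eqP (nesym nzy)).
by rewrite o2.
Qed.

Lemma par_le1 v x y : indeg N v <= 1 -> (x,v) \in arcs N -> (y,v) \in arcs N -> x = y.
Proof.
move=> h hx hy; case: (x =P y) => // nxy.
by have := indeg_ge2 nuA hx hy (introN eqP nxy); rewrite ltnNge h.
Qed.

Lemma two_ch_par v x y u w : (v,x) \in arcs N -> (v,y) \in arcs N -> x <> y ->
  (u,v) \in arcs N -> (w,v) \in arcs N -> u = w.
Proof. by move=> hx hy nxy; case: (two_ch hx hy nxy) => _ h; apply: par_le1. Qed.

Lemma leaf_in1 a : is_leaf N a -> indeg N a = 1.
Proof.
move=> [aV o0]; by case: (vtype aV) => [[_ [_]]|[[]|[[_]|[_]]]]; rewrite o0.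
Qed.

Lemma leaf_par a x y : is_leaf N a -> (x,a) \in arcs N -> (y,a) \in arcs N -> x = y.
Proof. by move=> la; apply: par_le1; rewrite leaf_in1. Qed.

Lemma leaf_out a y : is_leaf N a -> (a,y) \in arcs N -> False.
Proof. by move=> [_ o0]; apply: outdeg0. Qed.

Lemma ret_ch v x y : is_retic N v -> (v,x) \in arcs N -> (v,y) \in arcs N -> x = y.
Proof.
move=> [_ o1] hx hy; case: (x =P y) => // nxy.
by have := outdeg_ge2 nuA hx hy (introN eqP nxy); rewrite o1.
Qed.

Lemma ret_par v x y z : is_retic N v -> (x,v) \in arcs N -> (y,v) \in arcs N ->
  x <> y -> (z,v) \in arcs N -> z = x \/ z = y.
Proof.
move=> [i2 _] hx hy nxy hz.
case: (z =P x) => [|nzx]; first by left.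
case: (z =P y) => [|nzy]; first by right.
have := indeg_ge3 nuA hx hy hz (introN eqP nxy) (introN eqP (nesym nzx)) (introN eqP (nesym nzy)).
by rewrite i2.
Qed.

Lemma ret_out v x : is_retic N v -> (v,x) \in arcs N -> True. Proof. by []. Qed.

End NetFacts.

Lemma dpath_trans N u v w : dpath N u v -> dpath N v w -> dpath N u w.
Proof.
elim=> [x y h|x y z h _ IH] p; [exact: dpath_cons h p | exact: dpath_cons h (IH p)].
Qed.

Lemma dpath_out N u w : dpath N u w -> exists z, (u,z) \in arcs N.
Proof. by case=> [x y h|x y z h _]; eexists; exact: h. Qed.

Definition dpb N u v : bool :=
  if excluded_middle_informative (dpath N u v) then true else false.
Lemma dpbP N u v : reflect (dpath N u v) (dpb N u v).
Proof. by rewrite /dpb; case: excluded_middle_informative => h; constructor. Qed.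

Lemma count_strict (T:eqType) (P Q : pred T) s x : (forall y, P y -> Q y) ->
  x \in s -> Q x -> ~~ P x -> count P s < count Q s.
Proof.
move=> PQ xs Qx nPx.
have E := count_predC P (filter Q s).
rewrite size_filter count_filter in E.
have eP : count (predI P Q) s = count P s.
  by apply: eq_count => y /=; case Py: (P y) => //=; rewrite PQ.
rewrite eP in E; rewrite -E -{1}[count P s]addn0 ltn_add2l.
by apply: (@countP_gt0 _ _ _ x); rewrite // mem_filter Qx.
Qed.

Lemma has_parent N r v : netR N r -> v \in verts N -> v <> r ->
  exists u, (u, v) \in arcs N.
Proof.
move=> hN vV nr.
have : 0 < indeg N v.
  case: (vtype hN vV) => [[//]|[[->]|[[->]|[->]]]] //.
rewrite -has_count => /hasP [[u w] h /= /eqP E]; subst; by exists u.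
Qed.

Lemma reach N r : netR N r -> forall v, v \in verts N -> v <> r -> dpath N r v.
Proof.
move=> hN.
suff H : forall k v, count (dpb N ^~ v) (verts N) <= k -> v \in verts N -> v <> r ->
   dpath N r v by move=> v; apply: H (leqnn _).
elim=> [|k IH] v hk vV nr; case: (has_parent hN vV nr) => u hu;
 have lt : count (dpb N ^~ u) (verts N) < count (dpb N ^~ v) (verts N).
- apply: (@count_strict _ _ _ _ u).
  + by move=> y /dpbP h; apply/dpbP; apply: dpath_trans h (dpath_arc hu).
  + exact: (arcV1 hN hu).
  + by apply/dpbP; apply: dpath_arc.
  + by apply/negP => /dpbP; apply: (nacyc hN).
- by move: (leq_trans lt hk).
- apply: (@count_strict _ _ _ _ u).
  + by move=> y /dpbP h; apply/dpbP; apply: dpath_trans h (dpath_arc hu).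
  + exact: (arcV1 hN hu).
  + by apply/dpbP; apply: dpath_arc.
  + by apply/negP => /dpbP; apply: (nacyc hN).
- case: (u =P r) => [E|nur]; first by subst; apply: dpath_arc.
  apply: dpath_trans (IH u _ (arcV1 hN hu) nur) (dpath_arc hu).
  by rewrite -ltnS; apply: leq_trans lt hk.
Qed.

Lemma indeg0_root N r p : netR N r -> p \in verts N -> indeg N p = 0 -> p = r.
Proof.
move=> hN pV i0; case: (vtype hN pV) => [[//]|[[]|[[]|[]]]]; by rewrite i0.
Qed.

Lemma root_small N r a b q y : netR N r -> (r,a) \in arcs N -> (r,b) \in arcs N ->
  a <> b -> is_leaf N a -> is_leaf N b -> q \in verts N -> q <> r ->
  (q,y) \in arcs N -> False.
Proof.
move=> hN ha hb nab la lb qV nqr hq.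
have := reach hN qV nqr => H; inversion H; subst.
- case: (two_ch_z hN ha hb nab H0) => E; subst.
  + exact: (leaf_out la hq).
  + exact: (leaf_out lb hq).
- case: (dpath_out H1) => z hz.
  case: (two_ch_z hN ha hb nab H0) => E; subst.
  + exact: (leaf_out la hz).
  + exact: (leaf_out lb hz).
Qed.


Definition FC (p b : nat) (e : nat * nat) := [&& e.1 != p, e.2 != p & e.2 != b].
Definition redC N (a b p g : nat) := Net [seq x <- verts N | (x != b) && (x != p)]
  ((g,a) :: filter (FC p b) (arcs N)).
Definition FR (pa pb : nat) (e : nat * nat) :=
  [&& e.1 != pa, e.2 != pa, e.1 != pb & e.2 != pb].
Definition cutR N (a b pa pb ga gb : nat) :=
  Net [seq x <- verts N | (x != pa) && (x != pb)]
      ((ga,a) :: (gb,b) :: filter (FR pa pb) (arcs N)).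

Lemma surg (P F : pred (nat*nat)) A R L : uniq A -> uniq R -> {subset R <= A} ->
  {in A, forall e, ~~ F e = (e \in R)} ->
  count P (L ++ filter F A) + count P R = count P L + count P A.
Proof.
move=> uA uR sRA hF; rewrite count_cat count_filter -addnA; congr (_ + _).
have E := count_predC F (filter P A); rewrite size_filter !count_filter in E.
rewrite -E; congr (_ + _); first by apply: eq_count => x /=; rewrite andbC.
have -> : count (predI (predC F) P) A = count P (filter (predC F) A).
  by rewrite count_filter; apply: eq_count => x /=; rewrite andbC.
have Hp : perm_eq (filter (predC F) A) R.
  apply: uniq_perm => //; first exact: filter_uniq.
  move=> x; rewrite mem_filter /=; case xA: (x \in A).
    by rewrite hF // andbT.
  rewrite andbF; apply/esym/negbTE/negP => /sRA; by rewrite xA.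
by move/permP: Hp => ->.
Qed.

Lemma dpath_sub N C : (forall x y, (x,y) \in arcs C -> dpath N x y) ->
  forall u v, dpath C u v -> dpath N u v.
Proof.
move=> H u v; elim=> [x y h|x y z h _ IH]; first exact: H.
exact: dpath_trans (H _ _ h) IH.
Qed.

Lemma memV_redC N a b p g x :
  (x \in verts (redC N a b p g)) = [&& x != b, x != p & x \in verts N].
Proof. by rewrite mem_filter andbA. Qed.
Lemma memA_redC N a b p g e :
  (e \in arcs (redC N a b p g)) = (e \in [:: (g,a)]) || (FC p b e && (e \in arcs N)).
Proof. by rewrite /= !in_cons mem_filter in_nil orbF. Qed.
Lemma memV_cutR N a b pa pb ga gb x :
  (x \in verts (cutR N a b pa pb ga gb)) = [&& x != pa, x != pb & x \in verts N].
Proof. by rewrite mem_filter andbA. Qed.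
Lemma memA_cutR N a b pa pb ga gb e :
  (e \in arcs (cutR N a b pa pb ga gb)) =
  (e \in [:: (ga,a); (gb,b)]) || (FR pa pb e && (e \in arcs N)).
Proof. by rewrite /= !in_cons mem_filter in_nil orbF orbA. Qed.

Lemma neqP (x y : nat) : x <> y -> x != y. Proof. by move/eqP. Qed.

Lemma stepC N r a b p g : netR N r -> cherry_at N a b p -> (g,p) \in arcs N ->
  [/\ reduce_cherry N b (redC N a b p g), netR (redC N a b p g) r,
      (forall v, v \in verts (redC N a b p g) ->
         indeg (redC N a b p g) v = indeg N v /\ outdeg (redC N a b p g) v = outdeg N v) &
      size (verts (redC N a b p g)) < size (verts N)].
Proof.
move=> hN ch hg; have ch' := ch; case: ch' => [nab [la [lb [ha hb]]]].
have aV : a \in verts N by case: la.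
have bV : b \in verts N by case: lb.
have pa := arc_neq hN ha; have pb := arc_neq hN hb; have gp := arc_neq hN hg.
have ga : g <> a by move=> E; subst; apply: (leaf_out la hg).
have gb : g <> b by move=> E; subst; apply: (leaf_out lb hg).
have parA x : (x,a) \in arcs N -> x = p by move=> hx; apply: (leaf_par hN la hx ha).
have parB x : (x,b) \in arcs N -> x = p by move=> hx; apply: (leaf_par hN lb hx hb).
have parP x : (x,p) \in arcs N -> x = g by move=> hx; apply: (two_ch_par hN ha hb nab hx hg).
have chP z : (p,z) \in arcs N -> z = a \/ z = b by move=> hz; apply: (two_ch_z hN ha hb nab hz).
have [uV uA ed ac [rV ir or cl]] := hN.
have pV : p \in verts N by apply: (arcV1 hN ha).
have gV : g \in verts N by apply: (arcV1 hN hg).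
have rp : r <> p by move=> E; subst; move: (indeg_gt0 hg); rewrite ir.
have rb : r <> b by move=> E; subst; case: lb => _; rewrite or.
set C := redC N a b p g.
set R := [:: (g,p); (p,a); (p,b)].
have uR : uniq R.
  rewrite /R /= !inE !xpair_eqE !negb_or !negb_and (neqP gp) (neqP pa) (neqP pb).
  by rewrite (neqP nab) !orbT.
have sR : {subset R <= arcs N} by move=> e; rewrite !inE => /or3P[]/eqP->.
have hF : {in arcs N, forall e, ~~ FC p b e = (e \in R)}.
  move=> [x y] h; rewrite /FC /= !inE !xpair_eqE !negb_and !negbK.
  apply/idP/idP.
  - case/or3P=> /eqP E; subst.
    + by case: (chP _ h) => ->; rewrite !eqxx !orbT.
    + by rewrite (parP _ h) !eqxx.
    + by rewrite (parB _ h) !eqxx !orbT.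
  - by case/or3P=> /andP[/eqP-> /eqP->]; rewrite !eqxx ?orbT.
have deg v : v \in verts C -> indeg C v = indeg N v /\ outdeg C v = outdeg N v.
  rewrite memV_redC => /and3P[vb vp _]; split.
  - have := surg (fun e : nat*nat => e.2 == v) [:: (g,a)] uA uR sR hF.
    rewrite /indeg /= (eq_sym p) (eq_sym b) (negbTE vb) (negbTE vp) /=.
    move=> Hl; clear -Hl; lia.
  - have := surg (fun e : nat*nat => e.1 == v) [:: (g,a)] uA uR sR hF.
    rewrite /outdeg /= (eq_sym p) (negbTE vp) /=.
    move=> Hl; clear -Hl; lia.
have uC : uniq (verts C) /\ uniq (arcs C).
  split; first exact: filter_uniq.
  rewrite /= filter_uniq // andbT mem_filter; apply/negP => /andP[_ /parA]; exact: gp.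
have vC x : (x \in verts C) <-> (x \in verts N /\ x <> b /\ x <> p).
  rewrite memV_redC; split.
  - by case/and3P=> /eqP ? /eqP ? ?.
  - by move=> [? [/eqP ? /eqP ?]]; apply/and3P.
have aC e : (e \in arcs C) <->
   (e = (g, a) \/ (e \in arcs N /\ e.1 <> p /\ e.2 <> p /\ e.2 <> b)).
  rewrite memA_redC inE /FC; split.
  - by case/orP=> [/eqP ->|/andP[/and3P[/eqP ? /eqP ? /eqP ?] ?]]; [left|right].
  - case=> [->|[? [/eqP ? [/eqP ? /eqP ?]]]]; first by rewrite eqxx.
    by apply/orP; right; apply/andP; split=> //; apply/and3P.
split.
- exists a, p; split=> //; right; exists g; do 2 split=> //.
  by case: uC.
  by case: uC.
- split; try by case: uC.
  + move=> e /aC [->|[eA [e1 [e2 e3]]]] /=; split; apply/vC.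
    * by split=> //; split.
    * by split=> //; split=> //; apply: nesym.
    * split; first by case: (ed e eA).
      split=> // E; case: e eA e1 e2 e3 E => x y /= eA _ _ _ E; subst.
      exact: (leaf_out lb eA).
    * by split; first by case: (ed e eA).
  + move=> u hu; apply: (nacyc hN); move: hu; apply: dpath_sub => x y /aC.
    case=> [[-> ->]|[h _]]; last exact: dpath_arc.
    exact: (dpath_cons hg (dpath_arc ha)).
  + have rC : r \in verts C by apply/vC.
    split=> //.
    * by case: (deg r rC) => ->.
    * by case: (deg r rC) => _ ->.
    * move=> v vC' nvr; case: (deg v vC') => -> ->; apply: cl => //.
      by case/vC: vC'.
- exact: deg.
- rewrite size_filter.
  apply: (@count_strict _ _ predT _ b) => //; last by rewrite eqxx.
Qed.

Lemma stepR N r a b pa pb ga gb : netR N r -> ret_cherry_at N a b pa pb ->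
  (ga,pa) \in arcs N -> (gb,pb) \in arcs N -> gb <> pa ->
  [/\ cut_ret_cherry N a b (cutR N a b pa pb ga gb), netR (cutR N a b pa pb ga gb) r,
      (forall v, v \in verts (cutR N a b pa pb ga gb) ->
         indeg (cutR N a b pa pb ga gb) v = indeg N v /\
         outdeg (cutR N a b pa pb ga gb) v = outdeg N v) &
      size (verts (cutR N a b pa pb ga gb)) < size (verts N)].
Proof.
move=> hN rc hga hgb gbpa; have rc' := rc.
case: rc' => [nab [la [lb [ha [hb [rt hp]]]]]].
have aV : a \in verts N by case: la.
have bV : b \in verts N by case: lb.
have paa := arc_neq hN ha; have pbb := arc_neq hN hb; have gapa := arc_neq hN hga.
have gbpb := arc_neq hN hgb; have papb := arc_neq hN hp.
have apb : a <> pb by move=> E; subst; apply: (leaf_out la hb).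
have bpa : b <> pa by move=> E; subst; apply: (leaf_out lb ha).
have parA x : (x,a) \in arcs N -> x = pa by move=> hx; apply: (leaf_par hN la hx ha).
have parB x : (x,b) \in arcs N -> x = pb by move=> hx; apply: (leaf_par hN lb hx hb).
have parPa x : (x,pa) \in arcs N -> x = ga.
  by move=> hx; apply: (two_ch_par hN ha hp apb hx hga).
have chPa z : (pa,z) \in arcs N -> z = a \/ z = pb by move=> hz; apply: (two_ch_z hN ha hp apb hz).
have chPb z : (pb,z) \in arcs N -> z = b by move=> hz; apply: (ret_ch hN rt hz hb).
have parPb x : (x,pb) \in arcs N -> x = pa \/ x = gb.
  by move=> hx; apply: (ret_par hN rt hp hgb (nesym gbpa) hx).
have gapb : ga <> pb by move=> E; subst; apply: (arc_neq2 hN hp hga).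
have [uV uA ed ac [rV ir or cl]] := hN.
have paV : pa \in verts N by apply: (arcV1 hN ha).
have pbV : pb \in verts N by apply: (arcV1 hN hb).
have gaV : ga \in verts N by apply: (arcV1 hN hga).
have gbV : gb \in verts N by apply: (arcV1 hN hgb).
have rpa : r <> pa by move=> E; subst; move: (indeg_gt0 hga); rewrite ir.
have rpb : r <> pb by move=> E; subst; move: (indeg_gt0 hgb); rewrite ir.
set C := cutR N a b pa pb ga gb.
set R := [:: (ga,pa); (pa,a); (pa,pb); (gb,pb); (pb,b)].
have uR : uniq R.
  rewrite /R /= !inE !xpair_eqE !negb_or !negb_and (neqP gapa) (neqP paa) (neqP papb).
  by rewrite (neqP apb) (neqP (nesym gbpa)) (neqP (nesym bpa)) (neqP pbb) !orbT.
have sR : {subset R <= arcs N}.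
  by move=> e; rewrite !inE => /orP[/eqP->|/orP[/eqP->|/orP[/eqP->|/orP[/eqP->|/eqP->]]]].
have hF : {in arcs N, forall e, ~~ FR pa pb e = (e \in R)}.
  move=> [x y] h; rewrite /FR /= !inE !xpair_eqE !negb_and !negbK.
  apply/idP/idP.
  - case/or4P=> /eqP E; subst.
    + by case: (chPa _ h) => ->; rewrite !eqxx !orbT.
    + by rewrite (parPa _ h) !eqxx.
    + by rewrite (chPb _ h) !eqxx !orbT.
    + by case: (parPb _ h) => ->; rewrite !eqxx !orbT.
  - by case/or4P=> [|||/orP[]] /andP[/eqP-> /eqP->]; rewrite !eqxx ?orbT.
have deg v : v \in verts C -> indeg C v = indeg N v /\ outdeg C v = outdeg N v.
  rewrite (memV_cutR N a b pa pb ga gb v) => /and3P[vpa vpb _]; split.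
  - have := @surg (fun e : nat*nat => e.2 == v) (FR pa pb) (arcs N) R [:: (ga,a); (gb,b)] uA uR sR hF.
    rewrite /indeg /= (eq_sym pa) (eq_sym pb) (negbTE vpa) (negbTE vpb) /=.
    move=> Hl; clear -Hl; lia.
  - have := @surg (fun e : nat*nat => e.1 == v) (FR pa pb) (arcs N) R [:: (ga,a); (gb,b)] uA uR sR hF.
    rewrite /outdeg /= (eq_sym pa) (eq_sym pb) (negbTE vpa) (negbTE vpb) /=.
    move=> Hl; clear -Hl; lia.
have uC : uniq (verts C) /\ uniq (arcs C).
  split; first exact: filter_uniq.
  rewrite /= filter_uniq // andbT !inE !mem_filter xpair_eqE negb_or negb_and (neqP nab) orbT /=.
  apply/andP; split.
  + by apply/negP => /andP[_ /parA].
  + by apply/negP => /andP[_ /parB].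
have vC x : (x \in verts C) <-> (x \in verts N /\ x <> pa /\ x <> pb).
  rewrite (memV_cutR N a b pa pb ga gb x); split.
  - by case/and3P=> /eqP ? /eqP ? ?.
  - by move=> [? [/eqP ? /eqP ?]]; apply/and3P.
have aC e : (e \in arcs C) <->
   (e = (ga, a) \/ e = (gb, b) \/
    (e \in arcs N /\ e.1 <> pa /\ e.2 <> pa /\ e.1 <> pb /\ e.2 <> pb)).
  rewrite (memA_cutR N a b pa pb ga gb e) !inE /FR; split.
  - case/orP=> [/orP[/eqP ->|/eqP ->]|/andP[/and4P[/eqP ? /eqP ? /eqP ? /eqP ?] ?]].
    + by left.
    + by right; left.
    + by right; right.
  - case=> [->|[->|[? [/eqP ? [/eqP ? [/eqP ? /eqP ?]]]]]]; first by rewrite eqxx.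
    + by rewrite eqxx orbT.
    + by apply/orP; right; apply/andP; split=> //; apply/and4P.
split.
- exists pa, pb, ga, gb; do 4 (split; first by []).
  split; first by case: uC.
  split; first by case: uC.
  by split.
- split; try by case: uC.
  + move=> e /aC [->|[->|[eA [e1 [e2 [e3 e4]]]]]] /=; split; apply/vC.
    * by split=> //; split.
    * by split=> //; split=> //; apply: nesym.
    * by split=> //; split.
    * by split=> //; split=> //; apply: nesym.
    * by split; first by case: (ed e eA).
    * by split; first by case: (ed e eA).
  + move=> u hu; apply: (nacyc hN); move: hu; apply: dpath_sub => x y /aC.
    case=> [[-> ->]|[[-> ->]|[h _]]]; last exact: dpath_arc.
    exact: (dpath_cons hga (dpath_arc ha)).
    exact: (dpath_cons hgb (dpath_arc hb)).
  + have rC : r \in verts C by apply/vC.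
    split=> //.
    * by case: (deg r rC) => ->.
    * by case: (deg r rC) => _ ->.
    * move=> v vC' nvr; case: (deg v vC') => -> ->; apply: cl => //.
      by case/vC: vC'.
- exact: deg.
- rewrite size_filter.
  apply: (@count_strict _ _ predT _ pa) => //; last by rewrite eqxx.
Qed.
Definition wf N := uniq (verts N) /\ uniq (arcs N).
Definition eqn N M := [/\ wf N, wf M, verts N =i verts M & arcs N =i arcs M].

Inductive Q : net -> Prop :=
| Qs N : single_vertex N -> Q N
| Qr N N' : cherry_reduction N N' -> Q N' -> Q N.

Lemma eqn_sym N M : eqn N M -> eqn M N.
Proof. by case=> w1 w2 hV hA; split=> // x; rewrite ?hV ?hA. Qed.

Lemma eqn_refl N : wf N -> eqn N N.
Proof. by move=> w; split. Qed.

Lemma eqn_count N M (P : pred (nat*nat)) : eqn N M -> count P (arcs N) = count P (arcs M).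
Proof. by case=> [[_ uN] [_ uM] _ hA]; move/permP: (uniq_perm uN uM hA). Qed.

Lemma eqn_indeg N M v : eqn N M -> indeg N v = indeg M v.
Proof. exact: eqn_count. Qed.
Lemma eqn_outdeg N M v : eqn N M -> outdeg N v = outdeg M v.
Proof. exact: eqn_count. Qed.

Lemma eqn_leaf N M x : eqn N M -> is_leaf N x -> is_leaf M x.
Proof.
move=> E [h1 h2]; split; first by case: E => _ _ <-.
by rewrite -(eqn_outdeg _ E).
Qed.
Lemma eqn_retic N M x : eqn N M -> is_retic N x -> is_retic M x.
Proof. by move=> E [h1 h2]; split; rewrite -?(eqn_outdeg _ E) -?(eqn_indeg _ E). Qed.

Lemma eqn_cherry N M a b p : eqn N M -> cherry_at N a b p -> cherry_at M a b p.
Proof.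
move=> E [h1 [h2 [h3 [h4 h5]]]]; have [_ _ _ hA] := E.
by split=> //; split; [exact: eqn_leaf E h2|split; [exact: eqn_leaf E h3|rewrite -!hA]].
Qed.

Lemma eqn_ret N M a b pa pb : eqn N M -> ret_cherry_at N a b pa pb -> ret_cherry_at M a b pa pb.
Proof.
move=> E [h1 [h2 [h3 [h4 [h5 [h6 h7]]]]]]; have [_ _ _ hA] := E.
split=> //; split; first exact: eqn_leaf E h2.
split; first exact: eqn_leaf E h3.
by rewrite -!hA; do 2 (split=> //); split=> //; exact: eqn_retic E h6.
Qed.

Lemma eqn_red N M N' : eqn N M -> cherry_reduction N N' -> cherry_reduction M N'.
Proof.
move=> E; have [_ _ hV hA] := E; case=> [[b [a [p [ch br]]]]|[a [b [pa [pb [ga [gb [rc [h1 [h2 [h3 [h4 [h5 [h6 h7]]]]]]]]]]]]]].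
- left; exists b, a, p; split; first exact: eqn_cherry E ch.
  case: br => [[i0 rest]|[g [hg [u1 [u2 [hv ha]]]]]].
  + by left; rewrite -(eqn_indeg _ E).
  + right; exists g; rewrite -hA; do 3 (split=> //); split.
    * by move=> x; rewrite -hV.
    * by move=> e; rewrite -hA.
- right; exists a, b, pa, pb, ga, gb; split; first exact: eqn_ret E rc.
  rewrite -!hA; do 5 (split=> //); split.
  + by move=> x; rewrite -hV.
  + by move=> e; rewrite -hA.
Qed.

Lemma eqn_single N M : eqn N M -> single_vertex N -> single_vertex M.
Proof.
case=> [[uN _] [uM _] hV hA] [v [ev ea]]; exists v; split.
- have P : perm_eq (verts N) (verts M) by apply: uniq_perm.
  rewrite ev in P; have := perm_size P; case: (verts M) P => [|w [|? ?]] //= P _.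
  by have := perm_mem P w; rewrite !inE eqxx => /eqP ->.
- case E: (arcs M) => [|e s] //; have := hA e; rewrite E ea inE eqxx //.
Qed.

Lemma eqn_Q N M : eqn N M -> Q N -> Q M.
Proof.
move=> E q; case: q E => [N0 s|N0 N' st q] E.
- by apply: Qs; exact: eqn_single E s.
- by apply: Qr q; exact: eqn_red E st.
Qed.

Lemma dpath_eqn N M u v : arcs N =i arcs M -> dpath N u v -> dpath M u v.
Proof.
move=> hA; elim=> [x y h|x y z h _ IH]; first by apply: dpath_arc; rewrite -hA.
by apply: dpath_cons IH; rewrite -hA.
Qed.

Lemma eqn_netR N M r : eqn N M -> netR N r -> netR M r.
Proof.
move=> E [uV uA ed ac [rV ir or cl]]; have [_ [uV' uA'] hV hA] := E.
split=> //.
- by move=> e; rewrite -hA -!hV; apply: ed.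
- by move=> u /(dpath_eqn (fun e => esym (hA e))) /ac.
- split; first by rewrite -hV.
  + by rewrite -(eqn_indeg _ E).
  + by rewrite -(eqn_outdeg _ E).
  + by move=> v; rewrite -hV -(eqn_indeg _ E) -(eqn_outdeg _ E); apply: cl.
Qed.

Lemma single_net N : single_vertex N -> is_network N.
Proof.
move=> [v [ev ea]]; split; first by rewrite ev.
split; first by rewrite ea.
split; first by move=> e; rewrite ea.
split; first by move=> u /dpath_out [z]; rewrite ea.
by left; exists v.
Qed.
Lemma vC_redC N a b p g x : (x \in verts (redC N a b p g)) <-> (x \in verts N /\ x <> b /\ x <> p).
Proof.
rewrite (memV_redC N a b p g x); split.
- by case/and3P=> /eqP ? /eqP ? ?.
- by move=> [? [/eqP ? /eqP ?]]; apply/and3P.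
Qed.
Lemma aC_redC N a b p g e : (e \in arcs (redC N a b p g)) <->
   (e = (g, a) \/ (e \in arcs N /\ e.1 <> p /\ e.2 <> p /\ e.2 <> b)).
Proof.
rewrite (memA_redC N a b p g e) inE /FC; split.
- by case/orP=> [/eqP ->|/andP[/and3P[/eqP ? /eqP ? /eqP ?] ?]]; [left|right].
- case=> [->|[? [/eqP ? [/eqP ? /eqP ?]]]]; first by rewrite eqxx.
  by apply/orP; right; apply/andP; split=> //; apply/and3P.
Qed.
Lemma vC_cutR N a b pa pb ga gb x : (x \in verts (cutR N a b pa pb ga gb)) <->
  (x \in verts N /\ x <> pa /\ x <> pb).
Proof.
rewrite (memV_cutR N a b pa pb ga gb x); split.
- by case/and3P=> /eqP ? /eqP ? ?.
- by move=> [? [/eqP ? /eqP ?]]; apply/and3P.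
Qed.
Lemma aC_cutR N a b pa pb ga gb e : (e \in arcs (cutR N a b pa pb ga gb)) <->
   (e = (ga, a) \/ e = (gb, b) \/
    (e \in arcs N /\ e.1 <> pa /\ e.2 <> pa /\ e.1 <> pb /\ e.2 <> pb)).
Proof.
rewrite (memA_cutR N a b pa pb ga gb e) !inE /FR; split.
- case/orP=> [/orP[/eqP ->|/eqP ->]|/andP[/and4P[/eqP ? /eqP ? /eqP ? /eqP ?] ?]].
  + by left.
  + by right; left.
  + by right; right.
- case=> [->|[->|[? [/eqP ? [/eqP ? [/eqP ? /eqP ?]]]]]]; first by rewrite eqxx.
  + by rewrite eqxx orbT.
  + by apply/orP; right; apply/andP; split=> //; apply/and4P.
Qed.

Lemma netR_wf N r : netR N r -> wf N.
Proof. by case. Qed.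

Lemma classify N r N' : netR N r -> cherry_reduction N N' ->
  (exists a b p, cherry_at N a b p /\ indeg N p = 0 /\ single_vertex N') \/
  (exists a b p g, cherry_at N a b p /\ (g,p) \in arcs N /\ eqn N' (redC N a b p g)) \/
  (exists a b pa pb ga gb, ret_cherry_at N a b pa pb /\ (ga,pa) \in arcs N /\
     (gb,pb) \in arcs N /\ gb <> pa /\ eqn N' (cutR N a b pa pb ga gb)).
Proof.
move=> hN; case=> [[b [a [p [ch br]]]]|[a [b [pa [pb [ga [gb [rc [h1 [h2 [h3 [h4 [h5 [h6 h7]]]]]]]]]]]]]].
- case: br => [[i0 [ev ea]]|[g [hg [u1 [u2 [hv ha]]]]]].
  + by left; exists a, b, p; split=> //; split=> //; exists a.
  + right; left; exists a, b, p, g; do 2 (split=> //).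
    have [_ hC _ _] := stepC hN ch hg.
    split=> //; first exact: netR_wf hC.
    * by move=> x; apply/idP/idP => H; [apply/vC_redC/hv | apply/hv/(vC_redC N a b p g)].
    * by move=> e; apply/idP/idP => H; [apply/aC_redC/ha | apply/ha/(aC_redC N a b p g)].
- right; right; exists a, b, pa, pb, ga, gb; do 4 (split=> //).
  have [_ hC _ _] := stepR hN rc h1 h2 h3.
  split=> //; first exact: netR_wf hC.
  * by move=> x; apply/idP/idP => H; [apply/vC_cutR/h6 | apply/h6/(vC_cutR N a b pa pb ga gb)].
  * by move=> e; apply/idP/idP => H; [apply/aC_cutR/h7 | apply/h7/(aC_cutR N a b pa pb ga gb)].
Qed.

Lemma red_arcs N N' : cherry_reduction N N' -> arcs N <> [::].
Proof.
case=> [[b [a [p [[_ [_ [_ [h _]]]] _]]]]|[a [b [pa [pb [ga [gb [[_ [_ [_ [h _]]]] _]]]]]]]] E;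
  by rewrite E in h.
Qed.

Lemma net_step N N' : is_network N -> cherry_reduction N N' -> is_network N'.
Proof.
move=> hN st; have [r hr] := net_netR hN (red_arcs st).
case: (classify hr st) => [[a [b [p [_ [_ s]]]]]|[[a [b [p [g [ch [hg E]]]]]]|[a [b [pa [pb [ga [gb [rc [h1 [h2 [h3 E]]]]]]]]]]]].
- exact: single_net.
- have [_ hC _ _] := stepC hr ch hg.
  exact: netR_net (eqn_netR (eqn_sym E) hC).
- have [_ hC _ _] := stepR hr rc h1 h2 h3.
  exact: netR_net (eqn_netR (eqn_sym E) hC).
Qed.

Lemma complete_Q N Ns l : complete_seq N Ns l -> Q N.
Proof.
move=> [[N0 st] s].
suff H : forall n i, i + n = l -> Q (Ns i) by rewrite -N0; apply: (H l 0).
elim=> [|n IH] i E; first by rewrite addn0 in E; subst; apply: Qs.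
apply: Qr (IH i.+1 _); last by rewrite addSnnS.
by apply: st; rewrite -E; lia.
Qed.

Section Ren.
Variables (sa sb : nat).
Definition sw (x : nat) : nat := if x == sa then sb else if x == sb then sa else x.
Lemma swK : cancel sw sw.
Proof.
move=> x; rewrite /sw; case: (x =P sa) => [->|na]; first by rewrite eqxx; case: (sb =P sa).
case: (x =P sb) => [->|nb]; first by rewrite eqxx.
by rewrite (introF eqP na) (introF eqP nb).
Qed.
Lemma sw_inj : injective sw. Proof. exact: can_inj swK. Qed.
Definition sw2 (e : nat * nat) := (sw e.1, sw e.2).
Lemma sw2K : cancel sw2 sw2. Proof. by case=> x y; rewrite /sw2 /= !swK. Qed.
Lemma sw2_inj : injective sw2. Proof. exact: can_inj sw2K. Qed.
Definition ren N := Net (map sw (verts N)) (map sw2 (arcs N)).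

Lemma memV_ren N x : (x \in verts (ren N)) = (sw x \in verts N).
Proof. by rewrite /= -{1}(swK x) (mem_map sw_inj). Qed.
Lemma memA_ren N e : (e \in arcs (ren N)) = (sw2 e \in arcs N).
Proof. by rewrite /= -{1}(sw2K e) (mem_map sw2_inj). Qed.
Lemma memA_ren2 N x y : ((sw x, sw y) \in arcs (ren N)) = ((x,y) \in arcs N).
Proof. by rewrite memA_ren /sw2 /= !swK. Qed.
Lemma memV_ren2 N x : (sw x \in verts (ren N)) = (x \in verts N).
Proof. by rewrite memV_ren swK. Qed.
Lemma swE x y : (sw x == y) = (x == sw y).
Proof. by rewrite -{1}(swK y) (inj_eq sw_inj). Qed.

Lemma indeg_ren N v : indeg (ren N) (sw v) = indeg N v.
Proof. by rewrite /indeg count_map; apply: eq_count => e /=; rewrite (inj_eq sw_inj). Qed.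
Lemma outdeg_ren N v : outdeg (ren N) (sw v) = outdeg N v.
Proof. by rewrite /outdeg count_map; apply: eq_count => e /=; rewrite (inj_eq sw_inj). Qed.

Lemma leaf_ren N x : is_leaf N x -> is_leaf (ren N) (sw x).
Proof. by case=> h1 h2; split; rewrite ?memV_ren2 ?outdeg_ren. Qed.
Lemma retic_ren N x : is_retic N x -> is_retic (ren N) (sw x).
Proof. by case=> h1 h2; split; rewrite ?indeg_ren ?outdeg_ren. Qed.

Lemma swne x y : x <> y -> sw x <> sw y.
Proof. by move=> h /sw_inj. Qed.

Lemma cherry_ren N a b p : cherry_at N a b p -> cherry_at (ren N) (sw a) (sw b) (sw p).
Proof.
case=> [h1 [h2 [h3 [h4 h5]]]]; split; first exact: swne.
by split; [exact: leaf_ren|split; [exact: leaf_ren|rewrite !memA_ren2]].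
Qed.

Lemma ret_ren N a b pa pb : ret_cherry_at N a b pa pb ->
  ret_cherry_at (ren N) (sw a) (sw b) (sw pa) (sw pb).
Proof.
case=> [h1 [h2 [h3 [h4 [h5 [h6 h7]]]]]]; split; first exact: swne.
split; first exact: leaf_ren.
split; first exact: leaf_ren.
by rewrite !memA_ren2; do 2 (split=> //); split=> //; exact: retic_ren.
Qed.

Lemma swX x y : sw x = y <-> x = sw y.
Proof. by split=> [<-|->]; rewrite swK. Qed.

Lemma uniq_ren N : wf N -> wf (ren N).
Proof. by case=> u1 u2; split; rewrite map_inj_uniq //; [exact: sw_inj|exact: sw2_inj]. Qed.

Lemma sw2X x y u v : (sw x, sw y) = (u,v) <-> (x,y) = (sw u, sw v).
Proof. by split=> [[<- <-]|[-> ->]]; rewrite !swK. Qed.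

Lemma red_ren N N' : cherry_reduction N N' -> cherry_reduction (ren N) (ren N').
Proof.
case=> [[b [a [p [ch br]]]]|[a [b [pa [pb [ga [gb [rc [h1 [h2 [h3 [h4 [h5 [h6 h7]]]]]]]]]]]]]].
- left; exists (sw b), (sw a), (sw p); split; first exact: cherry_ren.
  case: br => [[i0 [ev ea]]|[g [hg [u1 [u2 [hv ha]]]]]].
  + by left; rewrite indeg_ren /ren ev ea.
  + right; exists (sw g); rewrite memA_ren2; split=> //.
    have [u1' u2'] := uniq_ren (conj u1 u2); do 2 (split=> //); split.
    * move=> x; rewrite !memV_ren; have := hv (sw x); have := swX x b; have := swX x p.
      tauto.
    * move=> [x y]; rewrite !memA_ren /sw2 /=; have := ha (sw x, sw y) => /=.
      have := sw2X x y g a; have := swX x p; have := swX y p; have := swX y b.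
      tauto.
- right; exists (sw a), (sw b), (sw pa), (sw pb), (sw ga), (sw gb).
  split; first exact: ret_ren.
  rewrite !memA_ren2; do 2 (split=> //); split; first exact: swne.
  have [u1' u2'] := uniq_ren (conj h4 h5); do 2 (split=> //); split.
  * move=> x; rewrite !memV_ren; have := h6 (sw x); have := swX x pa; have := swX x pb.
    tauto.
  * move=> [x y]; rewrite !memA_ren /sw2 /=; have := h7 (sw x, sw y) => /=.
    have := sw2X x y ga a; have := sw2X x y gb b.
    have := swX x pa; have := swX y pa; have := swX x pb; have := swX y pb.
    tauto.
Qed.

Lemma single_ren N : single_vertex N -> single_vertex (ren N).
Proof. by case=> v [ev ea]; exists (sw v); rewrite /ren ev ea. Qed.

Lemma Q_ren N : Q N -> Q (ren N).
Proof.
elim=> [N0 s|N0 N1 st _ IH]; first by apply: Qs; exact: single_ren.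
by apply: Qr IH; exact: red_ren.
Qed.
End Ren.
Lemma cherry_sym N a b p : cherry_at N a b p -> cherry_at N b a p.
Proof. by case=> [h1 [h2 [h3 [h4 h5]]]]; split; first exact: nesym. Qed.

Lemma swap_eqn N r a b p g : netR N r -> cherry_at N a b p -> (g,p) \in arcs N ->
  eqn (redC N b a p g) (ren a b (redC N a b p g)).
Proof.
move=> hN ch hg; have ch' := ch; case: ch' => [nab [la [lb [ha hb]]]].
have [_ h1 _ _] := stepC hN (cherry_sym ch) hg.
have [_ h2 _ _] := stepC hN ch hg.
have pa := arc_neq hN ha; have pb := arc_neq hN hb; have gp := arc_neq hN hg.
have ga : g <> a by move=> E; subst; apply: (leaf_out la hg).
have gb : g <> b by move=> E; subst; apply: (leaf_out lb hg).
have parA x : (x,a) \in arcs N -> x = p by move=> hx; apply: (leaf_par hN la hx ha).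
have parB x : (x,b) \in arcs N -> x = p by move=> hx; apply: (leaf_par hN lb hx hb).
have aV : a \in verts N by case: la.
have bV : b \in verts N by case: lb.
split; first exact: netR_wf h1.
- exact: (uniq_ren a b (netR_wf h2)).
- move=> x; rewrite memV_ren !memV_redC /sw.
  case: (x =P a) => [->|xa]; first by rewrite eqxx.
  case: (x =P b) => [->|xb]; first by rewrite (neqP nab) (neqP (nesym pb)) (neqP (nesym pa)) aV bV.
  by rewrite (neqP xb).
- move=> [x y]; rewrite memA_ren !memA_redC /FC /sw2 /sw /= !inE !xpair_eqE.
  have nA z : (a,z) \in arcs N = false by apply/negP => /(leaf_out la).
  have nB z : (b,z) \in arcs N = false by apply/negP => /(leaf_out lb).
  have gaF : (a == g) = false by apply/negbTE/neqP/nesym.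
  have gbF : (b == g) = false by apply/negbTE/neqP/nesym.
  have abF : (a == b) = false by apply/negbTE/neqP.
  have baF : (b == a) = false by apply/negbTE/neqP/nesym.
  case: (x =P a) => [->|xa]; first by rewrite nA nB gaF gbF !andbF.
  case: (x =P b) => [->|xb]; first by rewrite nA nB gaF gbF !andbF.
  case: (y =P a) => [->|ya]; first by rewrite eqxx /= abF baF !andbF.
  case: (y =P b) => [->|yb].
    rewrite !eqxx /= !andbT ?baF ?abF.
    case: (x =P g) => [->|xg] //=.
    case E1: ((x,b) \in arcs N); first by rewrite (parB _ E1) eqxx.
    case E2: ((x,a) \in arcs N); first by rewrite (parA _ E2) eqxx.
    by rewrite !andbF.
  by rewrite (negbTE (neqP ya)) (neqP yb) andbF.
Qed.
Lemma comm_or (x1 x2 f1 f2 r : bool) : (x1 -> f2) -> (x2 -> f1) ->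
  (x2 || (f2 && (x1 || (f1 && r)))) = (x1 || (f1 && (x2 || (f2 && r)))).
Proof.
case: x1; case: x2; case: f1; case: f2; case: r => //= H1 H2;
  by [move: (H1 isT) | move: (H2 isT)].
Qed.

Lemma vcomm (A B C D E : bool) : [&& A, B & [&& C, D & E]] = [&& C, D & [&& A, B & E]].
Proof. by case: A; case: B; case: C; case: D. Qed.

Lemma CC_side N r a1 b1 p1 g1 a2 b2 p2 g2 : netR N r ->
  cherry_at N a1 b1 p1 -> (g1,p1) \in arcs N ->
  cherry_at N a2 b2 p2 -> (g2,p2) \in arcs N -> p1 <> p2 ->
  [/\ cherry_at (redC N a1 b1 p1 g1) a2 b2 p2, (g2,p2) \in arcs (redC N a1 b1 p1 g1)
    & FC p1 b1 (g2,a2)].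
Proof.
move=> hN c1 hg1 c2 hg2 p12.
have [_ _ deg _] := stepC hN c1 hg1.
have c1' := c1; case: c1' => [nab1 [la1 [lb1 [ha1 hb1]]]].
have c2' := c2; case: c2' => [nab2 [la2 [lb2 [ha2 hb2]]]].
have a2b1 : a2 <> b1 by move=> E; subst; apply: p12; apply: (leaf_par hN lb1 hb1 ha2).
have b2b1 : b2 <> b1 by move=> E; subst; apply: p12; apply: (leaf_par hN lb1 hb1 hb2).
have a2p1 : a2 <> p1 by move=> E; subst; apply: (leaf_out la2 ha1).
have b2p1 : b2 <> p1 by move=> E; subst; apply: (leaf_out lb2 ha1).
have p2b1 : p2 <> b1 by move=> E; subst; apply: (leaf_out lb1 ha2).
have g2p1 : g2 <> p1.
  move=> E; subst; case: (two_ch_z hN ha1 hb1 nab1 hg2) => E; subst.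
  + exact: (leaf_out la1 ha2).
  + exact: (leaf_out lb1 ha2).
have lv x : is_leaf N x -> x <> b1 -> x <> p1 -> is_leaf (redC N a1 b1 p1 g1) x.
  move=> [xV o0] xb xp; have xM : x \in verts (redC N a1 b1 p1 g1) by apply/vC_redC.
  by split=> //; case: (deg x xM) => _ ->.
split.
- split=> //; split; first exact: lv.
  split; first exact: lv.
  have p21 := nesym p12.
  by split; apply/aC_redC; right; repeat split=> //=.
- have p21 := nesym p12.
  by apply/aC_redC; right; repeat split=> //=.
- by apply/and3P; split; apply/neqP.
Qed.

Lemma CC_join N r a1 b1 p1 g1 a2 b2 p2 g2 : netR N r ->
  cherry_at N a1 b1 p1 -> (g1,p1) \in arcs N ->
  cherry_at N a2 b2 p2 -> (g2,p2) \in arcs N -> p1 <> p2 ->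
  exists K K', cherry_reduction (redC N a1 b1 p1 g1) K /\
    cherry_reduction (redC N a2 b2 p2 g2) K' /\ eqn K K'.
Proof.
move=> hN c1 hg1 c2 hg2 p12.
have [cM hM fM] := CC_side hN c1 hg1 c2 hg2 p12.
have [cM' hM' fM'] := CC_side hN c2 hg2 c1 hg1 (nesym p12).
have [_ n1 _ _] := stepC hN c1 hg1.
have [_ n2 _ _] := stepC hN c2 hg2.
have [s1 k1 _ _] := stepC n1 cM hM.
have [s2 k2 _ _] := stepC n2 cM' hM'.
exists (redC (redC N a1 b1 p1 g1) a2 b2 p2 g2), (redC (redC N a2 b2 p2 g2) a1 b1 p1 g1).
split; first by left; exists b2.
split; first by left; exists b1.
split; [exact: netR_wf k1|exact: netR_wf k2| |].
- by move=> x; rewrite !memV_redC vcomm.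
- move=> e; rewrite (memA_redC (redC N a1 b1 p1 g1)) (memA_redC N a1 b1)
     (memA_redC (redC N a2 b2 p2 g2)) (memA_redC N a2 b2).
  by apply: comm_or; rewrite inE => /eqP ->.
Qed.
Lemma CR_facts N r a1 b1 p1 g1 a2 b2 pa pb ga gb : netR N r ->
  cherry_at N a1 b1 p1 -> (g1,p1) \in arcs N ->
  ret_cherry_at N a2 b2 pa pb -> (ga,pa) \in arcs N -> (gb,pb) \in arcs N ->
  [/\ [/\ p1 <> pa, p1 <> pb, a2 <> b1, b2 <> b1 & a2 <> p1],
      [/\ b2 <> p1, pa <> b1, pb <> b1, ga <> p1 & gb <> p1],
      [/\ a1 <> pa, a1 <> pb, b1 <> pa, b1 <> pb & g1 <> pa] & g1 <> pb].
Proof.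
move=> hN c1 hg1 rc hga hgb.
have c1' := c1; case: c1' => [nab1 [la1 [lb1 [ha1 hb1]]]].
case: rc => [nab2 [la2 [lb2 [ha2 [hb2 [rt hp]]]]]].
have apb : a2 <> pb by move=> E; subst; apply: (leaf_out la2 hb2).
have p1pa : p1 <> pa.
  move=> E; subst; case: (two_ch_z hN ha1 hb1 nab1 hp) => E; subst.
  + exact: (leaf_out la1 hb2).
  + exact: (leaf_out lb1 hb2).
have p1pb : p1 <> pb by move=> E; subst; apply: nab1; apply: (ret_ch hN rt ha1 hb1).
split; [split|split|split|].
- exact: p1pa.
- exact: p1pb.
- by move=> E; subst; apply: p1pa; apply: (leaf_par hN lb1 hb1 ha2).
- by move=> E; subst; apply: p1pb; apply: (leaf_par hN lb1 hb1 hb2).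
- by move=> E; subst; apply: (leaf_out la2 ha1).
- by move=> E; subst; apply: (leaf_out lb2 ha1).
- by move=> E; subst; apply: (leaf_out lb1 ha2).
- by move=> E; subst; apply: (leaf_out lb1 hb2).
- move=> E; subst; case: (two_ch_z hN ha1 hb1 nab1 hga) => E; subst.
  + exact: (leaf_out la1 ha2).
  + exact: (leaf_out lb1 ha2).
- move=> E; subst; case: (two_ch_z hN ha1 hb1 nab1 hgb) => E; subst.
  + exact: (leaf_out la1 hb2).
  + exact: (leaf_out lb1 hb2).
- by move=> E; subst; apply: (leaf_out la1 ha2).
- by move=> E; subst; apply: (leaf_out la1 hb2).
- by move=> E; subst; apply: (leaf_out lb1 ha2).
- by move=> E; subst; apply: (leaf_out lb1 hb2).
- move=> E; subst; case: (two_ch_z hN ha2 hp apb hg1) => E; subst.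
  + exact: (leaf_out la2 ha1).
  + exact: p1pb.
- move=> E; subst; have := ret_ch hN rt hg1 hb2 => E; subst.
  exact: (leaf_out lb2 ha1).
Qed.

Lemma CR_join N r a1 b1 p1 g1 a2 b2 pa pb ga gb : netR N r ->
  cherry_at N a1 b1 p1 -> (g1,p1) \in arcs N ->
  ret_cherry_at N a2 b2 pa pb -> (ga,pa) \in arcs N -> (gb,pb) \in arcs N -> gb <> pa ->
  exists K K', cherry_reduction (redC N a1 b1 p1 g1) K /\
    cherry_reduction (cutR N a2 b2 pa pb ga gb) K' /\ eqn K K'.
Proof.
move=> hN c1 hg1 rc hga hgb gbpa.
have [[f1 f2 f3 f4 f5] [f6 f7 f8 f9 f10] [f11 f12 f13 f14 f15] f16] :=
  CR_facts hN c1 hg1 rc hga hgb.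
have [_ n1 deg1 _] := stepC hN c1 hg1.
have [_ n2 deg2 _] := stepR hN rc hga hgb gbpa.
have c1' := c1; case: c1' => [nab1 [la1 [lb1 [ha1 hb1]]]].
have rc' := rc; case: rc' => [nab2 [la2 [lb2 [ha2 [hb2 [rt hp]]]]]].
have pa1 := nesym f1; have pb1 := nesym f2.
have rcM : ret_cherry_at (redC N a1 b1 p1 g1) a2 b2 pa pb.
  have pbM : pb \in verts (redC N a1 b1 p1 g1).
    by apply/vC_redC; split; [exact: (arcV1 hN hb2)|split].
  have lv x : is_leaf N x -> x <> b1 -> x <> p1 -> is_leaf (redC N a1 b1 p1 g1) x.
    move=> [xV o0] xb xp; have xM : x \in verts (redC N a1 b1 p1 g1) by apply/vC_redC.
    by split=> //; case: (deg1 x xM) => _ ->.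
  split=> //; split; first exact: lv.
  split; first exact: lv.
  split; first by apply/aC_redC; right; repeat split=> //=.
  split; first by apply/aC_redC; right; repeat split=> //=.
  split; first by rewrite /is_retic; case: (deg1 pb pbM) => -> ->.
  by apply/aC_redC; right; repeat split=> //=.
have gaM : (ga,pa) \in arcs (redC N a1 b1 p1 g1).
  by apply/aC_redC; right; repeat split=> //=.
have gbM : (gb,pb) \in arcs (redC N a1 b1 p1 g1).
  by apply/aC_redC; right; repeat split=> //=.
have cM : cherry_at (cutR N a2 b2 pa pb ga gb) a1 b1 p1.
  have lv x : is_leaf N x -> x <> pa -> x <> pb -> is_leaf (cutR N a2 b2 pa pb ga gb) x.
    move=> [xV o0] xb xp; have xM : x \in verts (cutR N a2 b2 pa pb ga gb) by apply/vC_cutR.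
    by split=> //; case: (deg2 x xM) => _ ->.
  split=> //; split; first exact: lv.
  split; first exact: lv.
  by split; apply/aC_cutR; right; right; repeat split=> //=.
have g1M : (g1,p1) \in arcs (cutR N a2 b2 pa pb ga gb).
  by apply/aC_cutR; right; right; repeat split=> //=.
have [s1 k1 _ _] := stepR n1 rcM gaM gbM gbpa.
have [s2 k2 _ _] := stepC n2 cM g1M.
exists (cutR (redC N a1 b1 p1 g1) a2 b2 pa pb ga gb),
       (redC (cutR N a2 b2 pa pb ga gb) a1 b1 p1 g1).
split; first by right; exists a2, b2.
split; first by left; exists b1.
split; [exact: netR_wf k1|exact: netR_wf k2| |].
- by move=> x; rewrite memV_cutR memV_redC memV_redC memV_cutR vcomm.
- move=> e; rewrite (memA_cutR (redC N a1 b1 p1 g1)) (memA_redC N a1 b1)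
     (memA_redC (cutR N a2 b2 pa pb ga gb)) (memA_cutR N a2 b2).
  apply: comm_or; rewrite !inE.
  + move=> /eqP ->; rewrite /FR /=; apply/and4P; split; exact/neqP.
  + case/orP=> /eqP ->; rewrite /FC /=; apply/and3P; split; exact/neqP.
Qed.
Lemma RR_facts N r a1 b1 pa1 pb1 a2 b2 pa2 pb2 ga2 gb2 : netR N r ->
  ret_cherry_at N a1 b1 pa1 pb1 -> ret_cherry_at N a2 b2 pa2 pb2 ->
  (ga2,pa2) \in arcs N -> (gb2,pb2) \in arcs N -> b1 <> b2 ->
  [/\ [/\ pa2 <> pa1, pa2 <> pb1, pb2 <> pa1, pb2 <> pb1 & a2 <> pa1],
      [/\ a2 <> pb1, b2 <> pa1, b2 <> pb1, ga2 <> pa1 & ga2 <> pb1] &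
      gb2 <> pa1 /\ gb2 <> pb1].
Proof.
move=> hN rc1 rc2 hga hgb b12.
case: rc1 => [nab1 [la1 [lb1 [ha1 [hb1 [rt1 hp1]]]]]].
case: rc2 => [nab2 [la2 [lb2 [ha2 [hb2 [rt2 hp2]]]]]].
have apb1 : a1 <> pb1 by move=> E; subst; apply: (leaf_out la1 hb1).
have pb12 : pb2 <> pb1 by move=> E; subst; apply: b12; apply: (ret_ch hN rt1 hb1 hb2).
have pa12 : pa2 <> pa1.
  move=> E; subst; case: (two_ch_z hN ha1 hp1 apb1 ha2) => E; subst.
  + apply: b12; have := two_ch_z hN ha1 hp1 apb1 hp2; case=> E; subst.
    * by case: (leaf_out la1 hb2).
    * by apply: (ret_ch hN rt1 hb1 hb2).
  + exact: (leaf_out la2 hb1).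
have apb2 : a2 <> pb2 by move=> E; subst; apply: (leaf_out la2 hb2).
have pa2pb1 : pa2 <> pb1.
  move=> E; rewrite E in ha2 hp2; apply: apb2; exact: (ret_ch hN rt1 ha2 hp2).
split; [split|split|split].
- exact: pa12.
- exact: pa2pb1.
- by move=> E; subst; apply: apb1; apply: (ret_ch hN rt2 ha1 hp1).
- exact: pb12.
- by move=> E; subst; apply: (leaf_out la2 ha1).
- by move=> E; subst; apply: (leaf_out la2 hb1).
- by move=> E; subst; apply: (leaf_out lb2 ha1).
- by move=> E; subst; apply: (leaf_out lb2 hb1).
- move=> E; subst; case: (two_ch_z hN ha1 hp1 apb1 hga) => E; subst.
  + exact: (leaf_out la1 ha2).
  + exact: pa2pb1.
- move=> E; subst; have := ret_ch hN rt1 hga hb1 => E; subst.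
  exact: (leaf_out lb1 ha2).
- move=> E; subst; case: (two_ch_z hN ha1 hp1 apb1 hgb) => E; subst.
  + exact: (leaf_out la1 hb2).
  + exact: pb12.
- move=> E; subst; have := ret_ch hN rt1 hgb hb1 => E; subst.
  exact: (leaf_out lb1 hb2).
Qed.

Lemma RR_side N r a1 b1 pa1 pb1 ga1 gb1 a2 b2 pa2 pb2 ga2 gb2 : netR N r ->
  ret_cherry_at N a1 b1 pa1 pb1 -> (ga1,pa1) \in arcs N -> (gb1,pb1) \in arcs N -> gb1 <> pa1 ->
  ret_cherry_at N a2 b2 pa2 pb2 -> (ga2,pa2) \in arcs N -> (gb2,pb2) \in arcs N ->
  b1 <> b2 ->
  [/\ ret_cherry_at (cutR N a1 b1 pa1 pb1 ga1 gb1) a2 b2 pa2 pb2,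
      (ga2,pa2) \in arcs (cutR N a1 b1 pa1 pb1 ga1 gb1),
      (gb2,pb2) \in arcs (cutR N a1 b1 pa1 pb1 ga1 gb1),
      FR pa1 pb1 (ga2,a2) & FR pa1 pb1 (gb2,b2)].
Proof.
move=> hN rc1 hga1 hgb1 gp1 rc2 hga hgb b12.
have [[f1 f2 f3 f4 f5] [f6 f7 f8 f9 f10] [f11 f12]] := RR_facts hN rc1 rc2 hga hgb b12.
have [_ _ deg1 _] := stepR hN rc1 hga1 hgb1 gp1.
have rc' := rc2; case: rc' => [nab2 [la2 [lb2 [ha2 [hb2 [rt hp]]]]]].
set M := cutR N a1 b1 pa1 pb1 ga1 gb1.
have pbM : pb2 \in verts M.
  by apply/vC_cutR; split; [exact: (arcV1 hN hb2)|split].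
have lv x : is_leaf N x -> x <> pa1 -> x <> pb1 -> is_leaf M x.
  move=> [xV o0] xb xp; have xM : x \in verts M by apply/vC_cutR.
  by split=> //; case: (deg1 x xM) => _ ->.
split.
- split=> //; split; first exact: lv.
  split; first exact: lv.
  split; first by apply/aC_cutR; right; right; repeat split=> //=.
  split; first by apply/aC_cutR; right; right; repeat split=> //=.
  split; first by rewrite /is_retic; case: (deg1 pb2 pbM) => -> ->.
  by apply/aC_cutR; right; right; repeat split=> //=.
- by apply/aC_cutR; right; right; repeat split=> //=.
- by apply/aC_cutR; right; right; repeat split=> //=.
- by rewrite /FR /=; apply/and4P; split; exact/neqP.
- by rewrite /FR /=; apply/and4P; split; exact/neqP.
Qed.

Lemma RR_join N r a1 b1 pa1 pb1 ga1 gb1 a2 b2 pa2 pb2 ga2 gb2 : netR N r ->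
  ret_cherry_at N a1 b1 pa1 pb1 -> (ga1,pa1) \in arcs N -> (gb1,pb1) \in arcs N -> gb1 <> pa1 ->
  ret_cherry_at N a2 b2 pa2 pb2 -> (ga2,pa2) \in arcs N -> (gb2,pb2) \in arcs N -> gb2 <> pa2 ->
  b1 <> b2 ->
  exists K K', cherry_reduction (cutR N a1 b1 pa1 pb1 ga1 gb1) K /\
    cherry_reduction (cutR N a2 b2 pa2 pb2 ga2 gb2) K' /\ eqn K K'.
Proof.
move=> hN rc1 hga1 hgb1 gp1 rc2 hga2 hgb2 gp2 b12.
have [r1 x1 y1 F1 F2] := RR_side hN rc1 hga1 hgb1 gp1 rc2 hga2 hgb2 b12.
have [r2 x2 y2 F3 F4] := RR_side hN rc2 hga2 hgb2 gp2 rc1 hga1 hgb1 (nesym b12).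
have [_ n1 _ _] := stepR hN rc1 hga1 hgb1 gp1.
have [_ n2 _ _] := stepR hN rc2 hga2 hgb2 gp2.
have [s1 k1 _ _] := stepR n1 r1 x1 y1 gp2.
have [s2 k2 _ _] := stepR n2 r2 x2 y2 gp1.
exists (cutR (cutR N a1 b1 pa1 pb1 ga1 gb1) a2 b2 pa2 pb2 ga2 gb2),
       (cutR (cutR N a2 b2 pa2 pb2 ga2 gb2) a1 b1 pa1 pb1 ga1 gb1).
split; first by right; exists a2, b2.
split; first by right; exists a1, b1.
split; [exact: netR_wf k1|exact: netR_wf k2| |].
- by move=> x; rewrite !memV_cutR vcomm.
- move=> e; rewrite (memA_cutR (cutR N a1 b1 pa1 pb1 ga1 gb1)) (memA_cutR N a1 b1)
     (memA_cutR (cutR N a2 b2 pa2 pb2 ga2 gb2)) (memA_cutR N a2 b2).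
  apply: comm_or; rewrite !inE.
  + by case/orP=> /eqP ->.
  + by case/orP=> /eqP ->.
Qed.
Lemma rrb (X1 X2 Y1 Y2 f1 f2 fr1 fr2 A : bool) : (X2 -> f1) -> (X1 -> f2) ->
  (Y2 -> ~~ f2) -> (Y1 -> ~~ f1) -> f2 && fr1 = f1 && fr2 ->
  X2 || (f2 && (X1 || (Y2 || (fr1 && A)))) = X1 || (f1 && (X2 || (Y1 || (fr2 && A)))).
Proof.
case: X1; case: X2; case: Y1; case: Y2; case: f1; case: f2; case: fr1; case: fr2; case: A => //= h1 h2 h3 h4 h5;
  by [move: (h1 isT) | move: (h2 isT) | move: (h3 isT) | move: (h4 isT)].
Qed.

Lemma G_eq pa1 pa2 pb b e : FC pa2 b e && FR pa1 pb e = FC pa1 b e && FR pa2 pb e.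
Proof.
case: e => x y; rewrite /FC /FR /=.
by case: (x == pa1); case: (x == pa2); case: (y == pa1); case: (y == pa2);
   case: (x == pb); case: (y == pb); case: (y == b).
Qed.

Definition J M N' := (Q M -> Q N') \/
  exists K K', cherry_reduction M K /\ cherry_reduction N' K' /\ eqn K K'.

Lemma RRb_join N r a1 a2 b pa1 pa2 pb ga1 ga2 : netR N r ->
  ret_cherry_at N a1 b pa1 pb -> (ga1,pa1) \in arcs N -> (pa2,pb) \in arcs N -> pa2 <> pa1 ->
  ret_cherry_at N a2 b pa2 pb -> (ga2,pa2) \in arcs N -> (pa1,pb) \in arcs N ->
  exists K K', cherry_reduction (cutR N a1 b pa1 pb ga1 pa2) K /\
    cherry_reduction (cutR N a2 b pa2 pb ga2 pa1) K' /\ eqn K K'.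
Proof.
move=> hN rc1 hga1 hgb1 p21 rc2 hga2 hgb2.
have [_ n1 deg1 _] := stepR hN rc1 hga1 hgb1 p21.
have [_ n2 deg2 _] := stepR hN rc2 hga2 hgb2 (nesym p21).
have rc1' := rc1; case: rc1' => [nab1 [la1 [lb [ha1 [hb [rt hp1]]]]]].
have rc2' := rc2; case: rc2' => [nab2 [la2 [_ [ha2 [_ [_ hp2]]]]]].
have a1pa2 : a1 <> pa2 by move=> E; subst; apply: (leaf_out la1 ha2).
have a2pa1 : a2 <> pa1 by move=> E; subst; apply: (leaf_out la2 ha1).
have a1pb : a1 <> pb by move=> E; subst; apply: (leaf_out la1 hb).
have a2pb : a2 <> pb by move=> E; subst; apply: (leaf_out la2 hb).
have bpa1 : b <> pa1 by move=> E; subst; apply: (leaf_out lb ha1).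
have bpa2 : b <> pa2 by move=> E; subst; apply: (leaf_out lb ha2).
have bpb := nesym (arc_neq hN hb).
have pa1pb := arc_neq hN hp1; have pa2pb := arc_neq hN hp2.
have a12 : a1 <> a2 by move=> E; subst; apply: p21; apply: (leaf_par hN la2 ha2 ha1).
have ga2pa1 : ga2 <> pa1.
  move=> E; subst; case: (two_ch_z hN ha1 hp1 a1pb hga2) => E; subst.
  + exact: (leaf_out la1 ha2).
  + exact: pa2pb.
have ga2pb : ga2 <> pb.
  by move=> E; subst; have E := ret_ch hN rt hga2 hb; subst; apply: (leaf_out lb ha2).
have ga1pa2 : ga1 <> pa2.
  move=> E; subst; case: (two_ch_z hN ha2 hp2 a2pb hga1) => E; subst.
  + exact: (leaf_out la2 ha1).
  + exact: pa1pb.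
have ga1pb : ga1 <> pb.
  by move=> E; subst; have E := ret_ch hN rt hga1 hb; subst; apply: (leaf_out lb ha1).
have p12 := nesym p21.
set M1 := cutR N a1 b pa1 pb ga1 pa2.
set M2 := cutR N a2 b pa2 pb ga2 pa1.
have c1 : cherry_at M1 a2 b pa2.
  have lv x : is_leaf N x -> x <> pa1 -> x <> pb -> is_leaf M1 x.
    move=> [xV o0] xb xp; have xM : x \in verts M1 by apply/vC_cutR.
    by split=> //; case: (deg1 x xM) => _ ->.
  split; first exact: nab2.
  split; first exact: lv.
  split; first exact: lv.
  split; first by apply/aC_cutR; right; right; repeat split=> //=.
  by apply/aC_cutR; right; left.
have g1 : (ga2,pa2) \in arcs M1 by apply/aC_cutR; right; right; repeat split=> //=.
have c2 : cherry_at M2 a1 b pa1.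
  have lv x : is_leaf N x -> x <> pa2 -> x <> pb -> is_leaf M2 x.
    move=> [xV o0] xb xp; have xM : x \in verts M2 by apply/vC_cutR.
    by split=> //; case: (deg2 x xM) => _ ->.
  split; first exact: nab1.
  split; first exact: lv.
  split; first exact: lv.
  split; first by apply/aC_cutR; right; right; repeat split=> //=.
  by apply/aC_cutR; right; left.
have g2 : (ga1,pa1) \in arcs M2 by apply/aC_cutR; right; right; repeat split=> //=.
have [s1 k1 _ _] := stepC n1 c1 g1.
have [s2 k2 _ _] := stepC n2 c2 g2.
exists (redC M1 a2 b pa2 ga2), (redC M2 a1 b pa1 ga1).
split; first by left; exists b.
split; first by left; exists b.
split; [exact: netR_wf k1|exact: netR_wf k2| |].
- move=> x; rewrite (memV_redC M1 a2 b pa2 ga2) (memV_redC M2 a1 b pa1 ga1) /M1 /M2 (memV_cutR N a1 b pa1 pb ga1 pa2) (memV_cutR N a2 b pa2 pb ga2 pa1).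
  by case: (x == b); case: (x == pa1); case: (x == pa2); case: (x == pb).
- move=> e; rewrite (memA_redC M1 a2 b pa2 ga2) (memA_redC M2 a1 b pa1 ga1) /M1 /M2 (memA_cutR N a1 b pa1 pb ga1 pa2) (memA_cutR N a2 b pa2 pb ga2 pa1).
  rewrite !inE -!orbA.
  apply: (@rrb (e == (ga1,a1)) (e == (ga2,a2)) (e == (pa1,b)) (e == (pa2,b)) (FC pa1 b e) (FC pa2 b e) (FR pa1 pb e) (FR pa2 pb e) (e \in arcs N)); last exact: G_eq.
  + by move/eqP ->; rewrite /FC /=; apply/and3P; split; exact/neqP.
  + by move/eqP ->; rewrite /FC /=; apply/and3P; split; exact/neqP.
  + by move/eqP ->; rewrite /FC /= eqxx.
  + by move/eqP ->; rewrite /FC /= eqxx.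
Qed.

Lemma RR_all N r a1 b1 pa1 pb1 ga1 gb1 a2 b2 pa2 pb2 ga2 gb2 : netR N r ->
  ret_cherry_at N a1 b1 pa1 pb1 -> (ga1,pa1) \in arcs N -> (gb1,pb1) \in arcs N -> gb1 <> pa1 ->
  ret_cherry_at N a2 b2 pa2 pb2 -> (ga2,pa2) \in arcs N -> (gb2,pb2) \in arcs N -> gb2 <> pa2 ->
  J (cutR N a1 b1 pa1 pb1 ga1 gb1) (cutR N a2 b2 pa2 pb2 ga2 gb2).
Proof.
move=> hN rc1 hga1 hgb1 gp1 rc2 hga2 hgb2 gp2.
case: (b1 =P b2) => [E|b12]; last by right; apply: (RR_join hN rc1 hga1 hgb1 gp1 rc2 hga2 hgb2 gp2 b12).
subst b2.
have rc1' := rc1; case: rc1' => [nab1 [la1 [lb [ha1 [hb1 [rt hp1]]]]]].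
have rc2' := rc2; case: rc2' => [nab2 [la2 [_ [ha2 [hb2 [_ hp2]]]]]].
have E := leaf_par hN lb hb1 hb2; subst pb2.
have a1pb : a1 <> pb1 by move=> E; subst; apply: (leaf_out la1 hb1).
case: (a1 =P a2) => [E|a12].
  subst a2; have E := leaf_par hN la1 ha1 ha2; subst pa2.
  have E := two_ch_par hN ha1 hp1 a1pb hga1 hga2; subst ga2.
  case: (ret_par hN rt hp1 hgb1 (nesym gp1) hgb2) => E; first by case: gp2.
  by subst; left.
have p21 : pa2 <> pa1.
  move=> E; subst; case: (two_ch_z hN ha1 hp1 a1pb ha2) => E; subst; first by case: a12.
  exact: (leaf_out la2 hb1).
case: (ret_par hN rt hp1 hgb1 (nesym gp1) hp2) => E; first by case: p21.
subst gb1.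
case: (ret_par hN rt hp2 hgb2 (nesym gp2) hp1) => E; first by case: p21.
subst gb2.
by right; apply: (RRb_join hN rc1 hga1 hgb1 p21 rc2 hga2 hgb2).
Qed.
Lemma CC_all N r a1 b1 p1 g1 a2 b2 p2 g2 : netR N r ->
  cherry_at N a1 b1 p1 -> (g1,p1) \in arcs N ->
  cherry_at N a2 b2 p2 -> (g2,p2) \in arcs N ->
  J (redC N a1 b1 p1 g1) (redC N a2 b2 p2 g2).
Proof.
move=> hN c1 hg1 c2 hg2.
case: (p1 =P p2) => [E|p12]; last by right; apply: (CC_join hN c1 hg1 c2 hg2 p12).
subst p2.
have c1' := c1; case: c1' => [nab1 [la1 [lb1 [ha1 hb1]]]].
have c2' := c2; case: c2' => [nab2 [la2 [lb2 [ha2 hb2]]]].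
have E := two_ch_par hN ha1 hb1 nab1 hg1 hg2; subst g2.
left.
case: (two_ch_z hN ha1 hb1 nab1 hb2) => E; subst b2.
- case: (two_ch_z hN ha1 hb1 nab1 ha2) => E; subst a2; first by case: nab2.
  move=> q; apply: eqn_Q (eqn_sym (swap_eqn hN c1 hg1)) _.
  exact: Q_ren.
- case: (two_ch_z hN ha1 hb1 nab1 ha2) => E; subst a2; last by case: nab2.
  by [].
Qed.

Lemma root_contra N r a b p q g y : netR N r -> cherry_at N a b p -> indeg N p = 0 ->
  (g,q) \in arcs N -> (q,y) \in arcs N -> False.
Proof.
move=> hN [nab [la [lb [ha hb]]]] i0 hg hq.
have E := indeg0_root hN (arcV1 hN ha) i0; subst p.
apply: (root_small hN ha hb nab la lb (arcV1 hN hq) _ hq).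
move=> E; subst q; move: (indeg_gt0 hg); by rewrite i0.
Qed.

Lemma thmA_n n : forall N, size (verts N) < n -> is_network N -> Q N ->
  forall N', cherry_reduction N N' -> Q N'.
Proof.
elim: n => [//|n IH] N sz hN q N' st.
case: q st hN sz => [N1 s|N1 M stM qM] st hN sz.
  by case: s => v [_ ea]; case: (red_arcs st).
have [r hr] := net_netR hN (red_arcs st).
have key : forall M0 N'0, eqn M M0 -> eqn N' N'0 -> netR M0 r ->
    size (verts M0) < size (verts N1) -> J M0 N'0 -> Q N'.
  move=> M0 N'0 E1 E2 n0 s0 [f|[K [K' [s1 [s2 E]]]]].
  - exact: (eqn_Q (eqn_sym E2) (f (eqn_Q E1 qM))).
  - have lt : size (verts M0) < n by move: s0 sz; clear; lia.
    have qK := IH M0 lt (netR_net n0) (eqn_Q E1 qM) K s1.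
    exact: (eqn_Q (eqn_sym E2) (Qr s2 (eqn_Q E qK))).
case: (classify hr st) => [[a2 [b2 [p2 [_ [_ s2]]]]]|[[a2 [b2 [p2 [g2 [c2 [h2 E2]]]]]]|[a2 [b2 [pa2 [pb2 [ga2 [gb2 [rc2 [x2 [y2 [z2 E2]]]]]]]]]]]].
- exact: Qs.
- case: (classify hr stM) => [[a1 [b1 [p1 [c1 [i1 _]]]]]|[[a1 [b1 [p1 [g1 [c1 [h1 E1]]]]]]|[a1 [b1 [pa1 [pb1 [ga1 [gb1 [rc1 [x1 [y1 [z1 E1]]]]]]]]]]]].
  + case: c2 => [_ [_ [_ [ha2 _]]]].
    case: (root_contra hr c1 i1 h2 ha2).
  + have [_ n1 _ sz1] := stepC hr c1 h1.
    exact: (key _ _ E1 E2 n1 sz1 (CC_all hr c1 h1 c2 h2)).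
  + have [_ n1 _ sz1] := stepR hr rc1 x1 y1 z1.
    apply: (key _ _ E1 E2 n1 sz1); right.
    have [K [K' [s1 [s2 E]]]] := CR_join hr c2 h2 rc1 x1 y1 z1.
    by exists K', K; split=> //; split=> //; apply: eqn_sym.
- case: (classify hr stM) => [[a1 [b1 [p1 [c1 [i1 _]]]]]|[[a1 [b1 [p1 [g1 [c1 [h1 E1]]]]]]|[a1 [b1 [pa1 [pb1 [ga1 [gb1 [rc1 [x1 [y1 [z1 E1]]]]]]]]]]]].
  + case: rc2 => [_ [_ [_ [ha2 _]]]].
    case: (root_contra hr c1 i1 x2 ha2).
  + have [_ n1 _ sz1] := stepC hr c1 h1.
    apply: (key _ _ E1 E2 n1 sz1); right.
    exact: (CR_join hr c1 h1 rc2 x2 y2 z2).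
  + have [_ n1 _ sz1] := stepR hr rc1 x1 y1 z1.
    exact: (key _ _ E1 E2 n1 sz1 (RR_all hr rc1 x1 y1 z1 rc2 x2 y2 z2)).
Qed.

Lemma thmA N : is_network N -> Q N -> forall N', cherry_reduction N N' -> Q N'.
Proof. exact: (thmA_n (ltnSn _)). Qed.

Theorem proposition4p1 (N : net) (Ns : nat -> net) (l : nat) :
  orchard N -> maximal_seq N Ns l -> single_vertex (Ns l).
Proof.
move=> [hN [Ms [m cs]]] [[N0 st] [nc nr]].
have hQ := complete_Q cs.
have H : forall i, i <= l -> is_network (Ns i) /\ Q (Ns i).
  elim=> [|i IH] il; first by rewrite N0.
  have [hi qi] := IH (ltnW il).
  have s := st i il; split; first exact: net_step hi s.
  exact: thmA hi qi _ s.
have [_ q] := H l (leqnn l).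
case: q nc nr => [N1 s|N1 N' st' _] nc nr //.
case: st' => [[b [a [p [ch _]]]]|[a [b [pa [pb [ga [gb [rc _]]]]]]]].
- by case: nc; exists a, b, p.
- by case: nr; exists a, b, pa, pb.
Qed.
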